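(* Let $p_1=(\alpha,r,\delta)$ be a condition, $D\subseteq\ell^2$ a dense open set, and $N\in\omega$. Then there exists a condition $p_2=(\beta,s,\eta)$ such that $p_2<p_1$, $U_{s,\eta}\subseteq D$, and $|\beta|>N$.
   Context: $\omega=\{0,1,2,\dots\}$; $\ell^2$ is the Hilbert space of square-summable real sequences indexed by $\omega$. For nonempty $q\in\mathbb Q^{<\omega}$ and rational $\varepsilon>0$, $U_{q,\varepsilon}=\{x\in\ell^2:\lVert (x\upharpoonright|q|)-q\rVert_\infty<\varepsilon|q|^{-1/2}\text{ and }\lVert x\upharpoonright[|q|,\infty)\rVert_2<\varepsilon\}$; for $q$ empty, $U_{q,\varepsilon}=\{x:\lVert x\rVert_2<\varepsilon\}$. For $w\in\{1,2\}^\omega$, $B_w(x)(i)=w(i)x(i+1)$. For $\alpha\in\{1,2\}^{<\omega}$, $\alpha^+\in\{1,2\}^\omega$ is $\alpha$ followed by all $2$'s. A condition is a triple $(\alpha,r,\delta)\in\{1,2\}^{<\omega}\times\mathbb Q^{<\omega}\times(\mathbb Q\cap(0,1))$ with $|\alpha|\ge|r|$ and $\delta<2^{-|\alpha|}$. For conditions $p_1=(\alpha_1,r_1,\delta_1)$ and $p_2=(\alpha_2,r_2,\delta_2)$, $p_2<p_1$ means: $\alpha_1$ is an initial segment of $\alpha_2$; the closure $\overline{U_{r_2,\delta_2}}\subseteq U_{r_1,\delta_1}$; and for all $k\in[|\alpha_1|,|\alpha_2|)$, $B^k_{\alpha_2^+}[U_{r_2,\delta_2}]\subseteq\{y\in\ell^2:\lVert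 y\rVert_2<1\}$. *)

(* Defs.v *)
From Stdlib Require Import Reals QArith Qreals List Lra.
From Coquelicot Require Import Coquelicot.
Import ListNotations.
Open Scope R_scope.

Definition seqR := nat -> R.
Definition l2 (x : seqR) : Prop := ex_series (fun i => (x i) ^ 2).
Definition norm2 (x : seqR) : R := sqrt (Series (fun i => (x i) ^ 2)).
Definition tail_norm2 (n : nat) (x : seqR) : R :=
  sqrt (Series (fun i => (x (i + n)%nat) ^ 2)).
Definition sub_seq (x y : seqR) : seqR := fun i => x i - y i.

(* Basic open sets U_{q,eps} (subsets of l^2).  For nonempty q, the sup-norm
   condition ||x|q - q||_oo < eps |q|^{-1/2} is written out coordinatewise. *)
Definition U (q : list Q) (eps : Q) (x : seqR) : Prop :=
  l2 x /\
  match q with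
  | [] => norm2 x < Q2R eps
  | _ =>
      (forall i, (i < length q)%nat ->
         Rabs (x i - Q2R (nth i q 0%Q)) < Q2R eps / sqrt (INR (length q)))
      /\ tail_norm2 (length q) x < Q2R eps
  end.

Definition closure_l2 (A : seqR -> Prop) (x : seqR) : Prop :=
  l2 x /\ forall e, 0 < e -> exists y, A y /\ norm2 (sub_seq x y) < e.
Definition open_l2 (D : seqR -> Prop) : Prop :=
  forall x, l2 x -> D x -> exists e, 0 < e /\
    forall y, l2 y -> norm2 (sub_seq y x) < e -> D y.
Definition dense_l2 (D : seqR -> Prop) : Prop :=
  forall x, l2 x -> forall e, 0 < e -> exists y, l2 y /\ D y /\ norm2 (sub_seq x y) < e.

Definition B (w : nat -> R) (x : seqR) : seqR := fun i => w i * x (S i).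
Definition Biter (w : nat -> R) (k : nat) (x : seqR) : seqR := Nat.iter k (B w) x.
Definition plus_ext (a : list nat) : nat -> R := fun i => INR (nth i a 2%nat).

Definition is_condition (a : list nat) (r : list Q) (d : Q) : Prop :=
  List.Forall (fun k => k = 1%nat \/ k = 2%nat) a /\
  (length r <= length a)%nat /\
  (0 < d)%Q /\ (d < 1)%Q /\
  Q2R d < pow (/ 2) (length a).

Definition cond_lt (a2 : list nat) (r2 : list Q) (d2 : Q)
                   (a1 : list nat) (r1 : list Q) (d1 : Q) : Prop :=
  (exists t, a2 = a1 ++ t) /\
  (forall x, closure_l2 (U r2 d2) x -> U r1 d1 x) /\
  (forall k, (length a1 <= k)%nat -> (k < length a2)%nat ->
     forall x, U r2 d2 x -> norm2 (Biter (plus_ext a2) k x) < 1).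

(* Main.v *)
Require Import Defs.
From Stdlib Require Import Reals QArith Qreals List Lra Lia Arith.
From Coquelicot Require Import Coquelicot.
Open Scope R_scope.

Definition sq (x : seqR) : R := Series (fun i => (x i) ^ 2).
Definition pad (s : list Q) : seqR := fun i => Q2R (nth i s 0%Q).

Lemma ex0 : ex_series (fun _ : nat => 0).
Proof.
  exists 0. apply is_series_Reals. intros eps He. exists 0%nat. intros n _.
  assert (sum_f_R0 (fun _ => 0) n = 0).
  { induction n; simpl; [lra|]. rewrite IHn; lra. }
  rewrite H. unfold Rdist. rewrite Rminus_0_r, Rabs_R0. lra.
Qed.

Lemma ex_le (a b : nat -> R) : (forall n, 0 <= a n <= b n) -> ex_series b -> ex_series a.
Proof.
  intros H Hb. apply (ex_series_le (V:=R_CompleteNormedModule)) with b; auto.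
  intros n. specialize (H n). change (Rabs (a n) <= b n). rewrite Rabs_pos_eq; lra.
Qed.

Lemma exP (a b : nat -> R) : ex_series a -> ex_series b -> ex_series (fun n => a n + b n).
Proof. intros; apply (ex_series_plus (V:=R_NormedModule)); auto. Qed.

Lemma exS (c : R) (a : nat -> R) : ex_series a -> ex_series (fun n => c * a n).
Proof. intros; apply (ex_series_scal_l (V:=R_NormedModule)); auto. Qed.

Lemma Series_nonneg (a : nat -> R) : ex_series a -> (forall n, 0 <= a n) -> 0 <= Series a.
Proof.
  intros Ha H.
  replace 0 with (Series (fun n => 0 * a n)) by (rewrite Series_scal_l; ring).
  apply Series_le; [intros n; specialize (H n); lra|].
  auto.
Qed.

Lemma sq_ineq (a b : R) : (a + b) ^ 2 <= 2 * a ^ 2 + 2 * b ^ 2.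
Proof. pose proof (pow2_ge_0 (a - b)). nra. Qed.

Lemma l2_sub x y : l2 x -> l2 y -> l2 (sub_seq x y).
Proof.
  unfold l2, sub_seq; intros Hx Hy.
  apply ex_le with (fun n => 2 * x n ^ 2 + 2 * y n ^ 2).
  - intros n. split; [apply pow2_ge_0|]. pose proof (sq_ineq (x n) (- y n)) as Hq. 
    replace (x n - y n) with (x n + - y n) by ring.
    replace ((- y n)^2) with (y n ^2) in Hq by ring. lra.
  - apply exP; apply exS; auto.
Qed.

Lemma sq_tri x y z : l2 x -> l2 y -> l2 z ->
  sq (sub_seq x z) <= 2 * sq (sub_seq x y) + 2 * sq (sub_seq y z).
Proof.
  intros Hx Hy Hz. unfold sq.
  pose proof (l2_sub _ _ Hx Hy) as H1. pose proof (l2_sub _ _ Hy Hz) as H2.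
  unfold l2 in *.
  rewrite <- !Series_scal_l, <- Series_plus by (apply exS; auto).
  apply Series_le.
  - intros n; unfold sub_seq. split; [apply pow2_ge_0|].
    replace (x n - z n) with ((x n - y n) + (y n - z n)) by ring. apply sq_ineq.
  - apply exP; apply exS; auto.
Qed.

Lemma sq_nonneg x : l2 x -> 0 <= sq x.
Proof. intros H; apply Series_nonneg; auto. intros; apply pow2_ge_0. Qed.

Lemma sq_sym x y : sq (sub_seq x y) = sq (sub_seq y x).
Proof. unfold sq, sub_seq; apply Series_ext; intros; ring. Qed.

Lemma tail_ex x n : l2 x -> ex_series (fun i => x (i + n)%nat ^ 2).
Proof.
  intros H. apply (ex_series_incr_n _ n) in H.
  apply (ex_series_ext (fun k => x (n + k)%nat ^ 2)); auto.
  intros; rewrite Nat.add_comm; auto.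
Qed.

Lemma sq_split x n : l2 x -> (0 < n)%nat ->
  sq x = sum_f_R0 (fun i => x i ^ 2) (pred n) + Series (fun i => x (i + n)%nat ^ 2).
Proof.
  intros H Hn. unfold sq. rewrite (Series_incr_n _ n Hn H). f_equal.
  apply Series_ext; intros; rewrite Nat.add_comm; auto.
Qed.

Lemma tail_le x n : l2 x -> Series (fun i => x (i + n)%nat ^ 2) <= sq x.
Proof.
  intros H. destruct n.
  - unfold sq. right. apply Series_ext; intros; rewrite Nat.add_0_r; auto.
  - rewrite (sq_split x (S n)) by (auto; lia).
    pose proof (cond_pos_sum (fun i => x i ^ 2) (pred (S n))). 
    assert (0 <= Series (fun i => x (i + S n)%nat ^ 2)) by (apply Series_nonneg; [apply tail_ex; auto| intros; apply pow2_ge_0]).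
    assert (0 <= sum_f_R0 (fun i => x i ^ 2) (pred (S n))) by (apply H0; intros; apply pow2_ge_0).
    lra.
Qed.

Lemma sum_ge_last (f : nat -> R) i : (forall n, 0 <= f n) -> f i <= sum_f_R0 f i.
Proof.
  intros H. destruct i; simpl; [lra|]. pose proof (cond_pos_sum f i H). lra.
Qed.

Lemma coord_le x i : l2 x -> x i ^ 2 <= sq x.
Proof.
  intros H. rewrite (sq_split x (S i)) by (auto; lia). simpl pred.
  pose proof (sum_ge_last (fun i => x i ^ 2) i (fun n => pow2_ge_0 (x n))).
  assert (0 <= Series (fun j => x (j + S i)%nat ^ 2)) by (apply Series_nonneg; [apply tail_ex; auto| intros; apply pow2_ge_0]).
  simpl in *. lra.
Qed.

Lemma pad_over s i : (length s <= i)%nat -> pad s i = 0.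
Proof. intros H; unfold pad; rewrite nth_overflow by auto; apply RMicromega.Q2R_0. Qed.

Lemma pad_l2 s : l2 (pad s).
Proof.
  unfold l2. apply (ex_series_incr_n _ (length s)).
  apply (ex_series_ext (fun _ => 0)); [|apply ex0].
  intros k. simpl. rewrite pad_over by lia. ring.
Qed.

Lemma norm_lt_sq S c : 0 <= S -> sqrt S < c -> S < c ^ 2.
Proof.
  intros H1 H2. pose proof (sqrt_sqrt S H1). pose proof (sqrt_pos S). nra.
Qed.

Lemma sq_lt_norm S c : 0 < c -> S < c ^ 2 -> sqrt S < c.
Proof.
  intros H1 H2. destruct (Rle_or_lt 0 S) as [H|H].
  - pose proof (sqrt_sqrt S H). pose proof (sqrt_pos S).
    destruct (Rlt_or_le (sqrt S) c); auto. nra.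
  - rewrite sqrt_neg_0 by lra. lra.
Qed.

Lemma tail_small x eps M : l2 x -> 0 < eps ->
  exists n, (M <= n)%nat /\ (0 < n)%nat /\ Series (fun i => x (i + n)%nat ^ 2) < eps.
Proof.
  intros H He. pose proof (Series_correct _ H) as Hs.
  apply is_series_Reals in Hs. destruct (Hs eps He) as [N HN].
  exists (S (Nat.max N M)). split; [lia|]. split; [lia|].
  specialize (HN (Nat.max N M) ltac:(lia)).
  pose proof (sq_split x (S (Nat.max N M)) H ltac:(lia)) as E. unfold sq in E.
  simpl pred in E. unfold Rdist in HN.
  rewrite Rabs_minus_sym in HN. pose proof (Rle_abs (Series (fun i : nat => x i ^ 2) -
        sum_f_R0 (fun i : nat => x i ^ 2) (Nat.max N M))). lra.
Qed.

Lemma rat_approx r t : 0 < t -> exists q : Q, Rabs (Q2R q - r) < t.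
Proof.
  intros Ht. destruct (archimed (/ t)) as [H1 _].
  set (K := up (/ t)) in *.
  assert (HK : (0 < K)%Z).
  { apply lt_IZR. pose proof (Rinv_0_lt_compat t Ht). simpl. lra. }
  destruct (archimed (r * IZR K)) as [A1 A2].
  exists (Qmake (up (r * IZR K)) (Z.to_pos K)).
  unfold Q2R; simpl. rewrite Z2Pos.id by auto.
  assert (0 < IZR K) by (apply IZR_lt; auto).
  set (z := IZR (up (r * IZR K))) in *.
  assert (E : z * / IZR K - r = (z - r * IZR K) / IZR K) by (field; lra).
  rewrite E. rewrite Rabs_pos_eq.
  - apply Rmult_lt_reg_r with (IZR K); auto. unfold Rdiv. rewrite Rmult_assoc, Rinv_l by lra.
    assert (t * IZR K > 1).
    { assert (/ t * t = 1) by (field; lra). nra. }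
    lra.
  - apply Rdiv_le_0_compat; lra.
Qed.

Lemma sum_le_const (f : nat -> R) t m : (forall i, (i <= m)%nat -> f i <= t) ->
  sum_f_R0 f m <= INR (S m) * t.
Proof.
  induction m; intros H.
  - simpl. specialize (H 0%nat ltac:(lia)). lra.
  - simpl sum_f_R0. rewrite S_INR. specialize (IHm (fun i Hi => H i ltac:(lia))).
    specialize (H (S m) ltac:(lia)). lra.
Qed.

Lemma build_list (y : seqR) t : 0 < t -> forall m, exists s : list Q, length s = m /\
  forall i, (i < m)%nat -> (pad s i - y i) ^ 2 <= t.
Proof.
  intros Ht. induction m.
  - exists nil. split; auto. intros; lia.
  - destruct IHm as [s [Hl Hs]].
    destruct (rat_approx (y m) (sqrt t) (sqrt_lt_R0 _ Ht)) as [q Hq].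
    exists (s ++ q :: nil). split; [rewrite length_app; simpl; lia|].
    intros i Hi. unfold pad. destruct (Nat.eq_dec i m).
    + subst i. rewrite app_nth2 by lia. rewrite Hl, Nat.sub_diag. simpl.
      pose proof (Rabs_pos (Q2R q - y m)).
      pose proof (sqrt_sqrt t ltac:(lra)).
      change ((Q2R q - y m) ^ 2 <= t). rewrite <- (pow2_abs (Q2R q - y m)). nra.
    + rewrite app_nth1 by lia. apply Hs. lia.
Qed.

Lemma approx y eps M : l2 y -> 0 < eps -> exists s : list Q,
  (M <= length s)%nat /\ (0 < length s)%nat /\ sq (sub_seq (pad s) y) < eps.
Proof.
  intros Hy He. destruct (tail_small y (eps/2) M Hy ltac:(lra)) as [n [H1 [H2 H3]]].
  assert (Hn : 0 < INR n) by (apply lt_0_INR; auto).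
  destruct (build_list y (eps / (4 * INR n)) ltac:(apply Rdiv_lt_0_compat; lra) n) as [s [Hl Hs]].
  exists s. subst n. split; auto. split; auto.
  rewrite (sq_split _ (length s)) by (auto; apply l2_sub; auto; apply pad_l2).
  assert (E: Series (fun i => sub_seq (pad s) y (i + length s)%nat ^ 2) = Series (fun i => y (i + length s)%nat ^ 2)).
  { apply Series_ext; intros i. unfold sub_seq. rewrite pad_over by lia. ring. }
  rewrite E.
  pose proof (sum_le_const (fun i => sub_seq (pad s) y i ^ 2) (eps / (4 * INR (length s))) (pred (length s))) as Hsum.
  rewrite Nat.succ_pred_pos in Hsum by auto.
  assert (INR (length s) * (eps / (4 * INR (length s))) = eps / 4) by (field; lra).
  cut (sum_f_R0 (fun i => sub_seq (pad s) y i ^ 2) (pred (length s)) <= eps / 4); [lra|].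
  rewrite <- H. apply Hsum. intros i Hi. apply Hs. lia.
Qed.

Fixpoint cf (w : nat -> R) (k i : nat) : R :=
  match k with 0%nat => 1 | S k => w i * cf w k (S i) end.

Lemma Biter_cf w k x i : Biter w k x i = cf w k i * x (i + k)%nat.
Proof.
  revert i. induction k; intros i.
  - simpl. rewrite Nat.add_0_r. ring.
  - change (w i * Biter w k x (S i) = w i * cf w k (S i) * x (i + S k)%nat).
    rewrite IHk. replace (S i + k)%nat with (i + S k)%nat by lia. ring.
Qed.

Lemma cf_bound w : (forall j, 0 <= w j <= 2) -> forall k i, 0 <= cf w k i <= 2 ^ k.
Proof.
  intros Hw k. induction k; intros i; simpl; [lra|].
  specialize (IHk (S i)). specialize (Hw i). nra.
Qed.

Lemma cf_small w A M : (forall j, 0 <= w j <= 2) -> (forall j, (A <= j)%nat -> (j < M)%nat -> w j = 1) ->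
  forall k i, (i + k <= M)%nat -> cf w k i <= 2 ^ (A - i).
Proof.
  intros Hw H1 k. induction k; intros i Hi; simpl.
  - apply pow_R1_Rle; lra.
  - specialize (IHk (S i) ltac:(lia)). pose proof (cf_bound w Hw k (S i)).
    destruct (le_lt_dec A i).
    + rewrite H1 by lia. replace (A - S i)%nat with 0%nat in IHk by lia.
      replace (A - i)%nat with 0%nat by lia. lra.
    + replace (A - i)%nat with (S (A - S i)) by lia. simpl. specialize (Hw i). nra.
Qed.

Lemma sq_mono c C z : 0 <= c <= C -> (c * z) ^ 2 <= C ^ 2 * z ^ 2.
Proof. intros H. pose proof (pow2_ge_0 z). replace ((c*z)^2) with (c^2 * z^2) by ring.
  apply Rmult_le_compat_r; auto. nra. Qed.

Lemma shift_bound w A n k s x0 x : (forall j, 0 <= w j <= 2) ->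
  (forall j, (A <= j)%nat -> (j < n)%nat -> w j = 1) ->
  (A <= k)%nat -> (k < n)%nat -> length s = n -> (forall j, (A <= j)%nat -> x0 j = 0) ->
  l2 x -> l2 x0 ->
  Series (fun i => Biter w k x i ^ 2) <=
    2 * (2 ^ A) ^ 2 * sq (sub_seq (pad s) x0) + 2 * (2 ^ n) ^ 2 * sq (sub_seq x (pad s)).
Proof.
  intros Hw H1 Hk1 Hk2 Hl Hx0 Hx Hx0l.
  assert (L1 : l2 (sub_seq (pad s) x0)) by (apply l2_sub; auto; apply pad_l2).
  assert (L2 : l2 (sub_seq x (pad s))) by (apply l2_sub; auto; apply pad_l2).
  pose proof (tail_le _ k L1). pose proof (tail_le _ k L2).
  pose proof (tail_ex _ k L1). pose proof (tail_ex _ k L2).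
  apply Rle_trans with (Series (fun i => 2 * (2 ^ A) ^ 2 * sub_seq (pad s) x0 (i + k)%nat ^ 2
        + 2 * (2 ^ n) ^ 2 * sub_seq x (pad s) (i + k)%nat ^ 2)).
  - apply Series_le; [|apply exP; apply exS; auto].
    intros i. split; [apply pow2_ge_0|]. rewrite Biter_cf.
    pose proof (cf_bound w Hw k i) as Cb.
    assert (Ck : 2 ^ k <= 2 ^ n) by (apply Rle_pow; [lra|lia]).
    unfold sub_seq. rewrite (Hx0 (i + k)%nat) by lia.
    set (c := cf w k i) in *. set (p := pad s (i + k)%nat) in *. set (z := x (i + k)%nat) in *.
    replace (c * z) with (c * p + c * (z - p)) by ring.
    pose proof (sq_ineq (c * p) (c * (z - p))).
    assert ((c * (z - p)) ^ 2 <= (2 ^ n) ^ 2 * (z - p) ^ 2) by (apply sq_mono; lra).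
    assert ((c * p) ^ 2 <= (2 ^ A) ^ 2 * (p - 0) ^ 2).
    { destruct (le_lt_dec n (i + k)).
      - unfold p. rewrite pad_over by lia. replace ((c*0)^2) with 0 by ring.
        replace ((0-0)^2) with 0 by ring. lra.
      - pose proof (cf_small w A n Hw H1 k i ltac:(lia)).
        assert (2 ^ (A - i) <= 2 ^ A) by (apply Rle_pow; [lra|lia]).
        replace (p - 0) with p by ring. apply sq_mono. fold c in H6. lra. }
    lra.
  - rewrite Series_plus by (apply exS; auto). rewrite !Series_scal_l.
    unfold sq in *. 
    assert (0 <= 2 * (2 ^ A) ^ 2) by (pose proof (pow2_ge_0 (2^A)); lra).
    assert (0 <= 2 * (2 ^ n) ^ 2) by (pose proof (pow2_ge_0 (2^n)); lra).
    apply Rplus_le_compat; apply Rmult_le_compat_l; auto.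
Qed.

Lemma abs_lt_of_sq a b : 0 < b -> a ^ 2 < b ^ 2 -> Rabs a < b.
Proof. intros Hb H. rewrite <- (pow2_abs a) in H. pose proof (Rabs_pos a).
  destruct (Rlt_or_le (Rabs a) b); auto. nra. Qed.

Lemma sqrt_pow2' L : 0 < L -> (sqrt L) ^ 2 = L.
Proof. intros; simpl; rewrite Rmult_1_r; apply sqrt_sqrt; lra. Qed.

Lemma U_bound q s' e z : U (q :: s') e z -> sq (sub_seq z (pad (q :: s'))) <= 2 * Q2R e ^ 2.
Proof.
  intros [Hz [Hc Ht]]. set (s := q :: s') in *. set (L := length s) in *.
  assert (HL : (0 < L)%nat) by (unfold L, s; simpl; lia).
  assert (HLr : 0 < INR L) by (apply lt_0_INR; auto).
  assert (Lz : l2 (sub_seq z (pad s))) by (apply l2_sub; auto; apply pad_l2).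
  rewrite (sq_split _ L Lz HL).
  assert (E: Series (fun i => sub_seq z (pad s) (i + L)%nat ^ 2) = Series (fun i => z (i + L)%nat ^ 2)).
  { apply Series_ext; intros i. unfold sub_seq. rewrite pad_over by (unfold L in *; lia). ring. }
  rewrite E.
  assert (T : Series (fun i => z (i + L)%nat ^ 2) < Q2R e ^ 2).
  { apply norm_lt_sq; auto. apply Series_nonneg; [apply tail_ex; auto| intros; apply pow2_ge_0]. }
  pose proof (sum_le_const (fun i => sub_seq z (pad s) i ^ 2) (Q2R e ^ 2 / INR L) (pred L)) as Hsum.
  rewrite Nat.succ_pred_pos in Hsum by auto.
  assert (INR L * (Q2R e ^ 2 / INR L) = Q2R e ^ 2) by (field; lra).
  cut (sum_f_R0 (fun i => sub_seq z (pad s) i ^ 2) (pred L) <= Q2R e ^ 2); [lra|].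
  rewrite <- H. apply Hsum. intros i Hi.
  specialize (Hc i ltac:(lia)). unfold sub_seq, pad.
  pose proof (Rabs_pos (z i - Q2R (nth i s 0%Q))).
  rewrite <- (pow2_abs (z i - Q2R (nth i s 0%Q))).
  replace (Q2R e ^ 2 / INR L) with ((Q2R e / sqrt (INR L)) ^ 2).
  - apply pow_incr. lra.
  - unfold Rdiv. rewrite Rpow_mult_distr, pow_inv, sqrt_pow2'; auto.
Qed.

Lemma into_U r d x : 0 < Q2R d -> l2 x ->
  sq (sub_seq x (pad r)) < Q2R d ^ 2 / INR (S (length r)) -> U r d x.
Proof.
  intros Hd Hx H. 
  assert (Lz : l2 (sub_seq x (pad r))) by (apply l2_sub; auto; apply pad_l2).
  assert (HL : 0 < INR (S (length r))) by (apply lt_0_INR; lia).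
  assert (Hle : Q2R d ^ 2 / INR (S (length r)) <= Q2R d ^ 2).
  { unfold Rdiv. rewrite <- (Rmult_1_r (Q2R d ^ 2)) at 2. apply Rmult_le_compat_l; [apply pow2_ge_0|].
    rewrite <- Rinv_1. apply Rinv_le_contravar; [lra|]. rewrite S_INR. pose proof (pos_INR (length r)). lra. }
  destruct r as [|q r'].
  - split; auto. unfold norm2. apply sq_lt_norm; auto.
    assert (E : Series (fun i => x i ^ 2) = sq (sub_seq x (pad nil))).
    { unfold sq, sub_seq. apply Series_ext; intros i. rewrite pad_over by (simpl; lia). ring. }
    rewrite E. lra.
  - set (r := q :: r') in *. split; auto. split.
    + intros i Hi. set (L := length r) in *.
      assert (HL0 : 0 < INR L) by (apply lt_0_INR; lia).
      apply abs_lt_of_sq.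
      * apply Rdiv_lt_0_compat; auto. apply sqrt_lt_R0; auto.
      * unfold Rdiv. rewrite Rpow_mult_distr, pow_inv, sqrt_pow2' by auto.
        pose proof (coord_le _ i Lz). unfold sub_seq, pad in H0.
        apply Rle_lt_trans with (1 := H0). apply Rlt_le_trans with (1 := H).
        unfold Rdiv. apply Rmult_le_compat_l; [apply pow2_ge_0|].
        apply Rinv_le_contravar; auto. rewrite S_INR; lra.
    + unfold tail_norm2. apply sq_lt_norm; auto.
      assert (E : Series (fun i => x (i + length r)%nat ^ 2) = Series (fun i => sub_seq x (pad r) (i + length r)%nat ^ 2)).
      { apply Series_ext; intros i. unfold sub_seq. rewrite pad_over by lia. ring. }
      rewrite E. pose proof (tail_le _ (length r) Lz). lra.
Qed.

Lemma small_rat t : 0 < t -> exists e : Q, (0 < e)%Q /\ 0 < Q2R e /\ Q2R e < t.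
Proof.
  intros Ht. destruct (archimed (/ t)) as [H1 _].
  set (K := up (/ t)) in *.
  assert (HK : (0 < K)%Z).
  { apply lt_IZR. pose proof (Rinv_0_lt_compat t Ht). simpl. lra. }
  assert (HKr : 0 < IZR K) by (apply IZR_lt; auto).
  assert (E : Q2R (Qmake 1 (Z.to_pos K)) = / IZR K).
  { unfold Q2R; simpl. rewrite Z2Pos.id by auto. ring. }
  exists (Qmake 1 (Z.to_pos K)).
  assert (0 < Q2R (Qmake 1 (Z.to_pos K))) by (rewrite E; apply Rinv_0_lt_compat; auto).
  split; [|split; auto].
  - apply Rlt_Qlt. rewrite RMicromega.Q2R_0. auto.
  - rewrite E. assert (t * IZR K > 1).
    { assert (/ t * t = 1) by (field; lra). nra. }
    apply Rmult_lt_reg_l with (IZR K); auto. rewrite Rinv_r by lra. lra.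
Qed.

Lemma nth_12 (b : list nat) : List.Forall (fun k : nat => k = 1%nat \/ k = 2%nat) b -> forall j : nat, 0 <= plus_ext b j <= 2.
Proof.
  intros H j. unfold plus_ext. destruct (le_lt_dec (length b) j).
  - rewrite nth_overflow by auto. simpl. lra.
  - rewrite List.Forall_forall in H. destruct (H (nth j b 2%nat) (nth_In _ _ l)) as [E|E]; rewrite E; simpl; lra.
Qed.

Lemma ext_one a m j : (length a <= j)%nat -> (j < length a + m)%nat ->
  plus_ext (a ++ repeat 1%nat m) j = 1.
Proof.
  intros H1 H2. unfold plus_ext. rewrite app_nth2 by auto.
  assert (In (nth (j - length a) (repeat 1%nat m) 2%nat) (repeat 1%nat m)) as Hi.
  { apply nth_In. rewrite repeat_length. lia. }
  apply repeat_spec in Hi. rewrite Hi. simpl. reflexivity.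
Qed.


Theorem lemma10 (a : list nat) (r : list Q) (d : Q) (D : seqR -> Prop) (N : nat) :
  is_condition a r d -> open_l2 D -> dense_l2 D ->
  exists (b : list nat) (s : list Q) (e : Q),
    is_condition b s e /\ cond_lt b s e a r d /\
    (forall x, U s e x -> D x) /\ (N < length b)%nat.
Proof.
  intros [Fa [Hra [Hd0 [Hd1 Hd2]]]] Hop Hden.
  set (A := length a) in *.
  assert (Hd : 0 < Q2R d) by (rewrite <- RMicromega.Q2R_0; apply Qlt_Rlt; auto).
  set (Cr := Q2R d ^ 2 / INR (S (length r))).
  assert (HCr : 0 < Cr).
  { unfold Cr. apply Rdiv_lt_0_compat; [apply pow_lt; auto| apply lt_0_INR; lia]. }
  assert (HA : 0 < (2 ^ A) ^ 2) by (apply pow_lt; apply pow_lt; lra).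
  set (m := Rmin (/ (4 * (2 ^ A) ^ 2)) (Cr / 16)).
  assert (Hm : 0 < m).
  { unfold m. apply Rmin_glb_lt; [apply Rinv_0_lt_compat; lra| lra]. }
  assert (Hm1 : m <= / (4 * (2 ^ A) ^ 2)) by apply Rmin_l.
  assert (Hm2 : m <= Cr / 16) by apply Rmin_r.
  set (x0 := pad r).
  assert (Lx0 : l2 x0) by apply pad_l2.
  destruct (Hden x0 Lx0 (sqrt (m / 4)) ltac:(apply sqrt_lt_R0; lra)) as [y [Ly [HDy Hy]]].
  assert (Hy1 : sq (sub_seq y x0) < m / 4).
  { rewrite sq_sym. unfold norm2 in Hy. apply norm_lt_sq in Hy.
    - rewrite sqrt_pow2' in Hy by lra. exact Hy.
    - apply sq_nonneg, l2_sub; auto. }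
  destruct (Hop y Ly HDy) as [rho [Hrho Hball]].
  set (eta2 := Rmin (m / 4) (rho ^ 2 / 4)).
  assert (He2 : 0 < eta2).
  { unfold eta2. apply Rmin_glb_lt; [lra|]. pose proof (pow_lt rho 2 Hrho). lra. }
  destruct (approx y eta2 (S (N + A)) Ly He2) as [s [Hs1 [Hs2 Hs3]]].
  destruct s as [|q s']; [simpl in Hs2; lia|].
  set (s := q :: s') in *.
  set (n := length s) in *.
  assert (Lps : l2 (pad s)) by apply pad_l2.
  assert (Hsig : sq (sub_seq (pad s) x0) < m).
  { pose proof (sq_tri (pad s) y x0 Lps Ly Lx0). 
    assert (eta2 <= m / 4) by apply Rmin_l. lra. }
  assert (Hn : 0 < (2 ^ n) ^ 2) by (apply pow_lt; apply pow_lt; lra).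
  set (t := Rmin (Rmin (/ (8 * (2 ^ n) ^ 2)) (Cr / 32)) (Rmin (rho ^ 2 / 8) (Rmin ((/ 2) ^ n) 1))).
  assert (Ht : 0 < t).
  { unfold t. pose proof (pow_lt rho 2 Hrho). pose proof (pow_lt (/2) n ltac:(lra)).
    repeat apply Rmin_glb_lt; try lra. apply Rinv_0_lt_compat; lra. }
  assert (Ht1 : t <= / (8 * (2 ^ n) ^ 2)) by (unfold t; eapply Rle_trans; apply Rmin_l).
  assert (Ht2 : t <= Cr / 32) by (unfold t; eapply Rle_trans; [apply Rmin_l| apply Rmin_r]).
  assert (Ht3 : t <= rho ^ 2 / 8) by (unfold t; eapply Rle_trans; [apply Rmin_r| apply Rmin_l]).
  assert (Ht4 : t <= (/ 2) ^ n) by (unfold t; eapply Rle_trans; [apply Rmin_r|]; eapply Rle_trans; [apply Rmin_r| apply Rmin_l]).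
  assert (Ht5 : t <= 1) by (unfold t; eapply Rle_trans; [apply Rmin_r|]; eapply Rle_trans; apply Rmin_r).
  destruct (small_rat t Ht) as [e [He0 [He0r Het]]].
  assert (Hee : Q2R e ^ 2 < t).
  { assert (Q2R e * Q2R e <= Q2R e * 1) by (apply Rmult_le_compat_l; lra). simpl. lra. }
  set (b := a ++ repeat 1%nat (n - A)).
  assert (Hlb : length b = n) by (unfold b; rewrite length_app, repeat_length; fold A; lia).
  exists b, s, e. split; [|split; [|split]].
  -
    split; [|split; [|split; [|split]]].
    + unfold b. apply Forall_app. split; auto. apply List.Forall_forall.
      intros k Hk. apply repeat_spec in Hk. auto.
    + lia.
    + auto.
    + apply Rlt_Qlt. rewrite RMicromega.Q2R_1. lra.
    + rewrite Hlb. lra.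
  - split; [|split].
    + exists (repeat 1%nat (n - A)). reflexivity.
    + intros x [Hx Hcl].
      destruct (Hcl (sqrt (Cr / 8)) ltac:(apply sqrt_lt_R0; lra)) as [z [Hz Hxz]].
      assert (Lz : l2 z) by (destruct Hz; auto).
      assert (Hxz2 : sq (sub_seq x z) < Cr / 8).
      { unfold norm2 in Hxz. apply norm_lt_sq in Hxz.
        - rewrite sqrt_pow2' in Hxz by lra. exact Hxz.
        - apply sq_nonneg, l2_sub; auto. }
      pose proof (U_bound q s' e z Hz) as Hzb. fold s in Hzb.
      apply into_U; auto. fold Cr.
      pose proof (sq_tri x z x0 Hx Lz Lx0).
      pose proof (sq_tri z (pad s) x0 Lz Lps Lx0).
      fold x0. lra.
    + intros k Hk1 Hk2 x Hx.
      assert (Lx : l2 x) by (destruct Hx; auto).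
      pose proof (U_bound q s' e x Hx) as Hxb. fold s in Hxb.
      rewrite Hlb in Hk2.
      pose proof (shift_bound (plus_ext b) A n k s x0 x) as Hsb.
      assert (Fb : List.Forall (fun k => k = 1%nat \/ k = 2%nat) b).
      { unfold b. apply Forall_app. split; auto. apply List.Forall_forall.
        intros k' Hk'. apply repeat_spec in Hk'. auto. }
      specialize (Hsb (nth_12 b Fb)).
      specialize (Hsb ltac:(intros j Hj1 Hj2; unfold b; apply ext_one; fold A; lia)).
      specialize (Hsb Hk1 Hk2 eq_refl).
      specialize (Hsb ltac:(intros j Hj; unfold x0; apply pad_over; lia) Lx Lx0).
      unfold norm2. apply sq_lt_norm; [lra|].
      assert (2 * (2 ^ A) ^ 2 * sq (sub_seq (pad s) x0) <= 2 * (2 ^ A) ^ 2 * m).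
      { apply Rmult_le_compat_l; lra. }
      assert (2 * (2 ^ A) ^ 2 * m <= / 2).
      { apply Rle_trans with (2 * (2 ^ A) ^ 2 * / (4 * (2 ^ A) ^ 2)).
        - apply Rmult_le_compat_l; lra.
        - right. field. apply pow_nonzero; lra. }
      assert (2 * (2 ^ n) ^ 2 * sq (sub_seq x (pad s)) < / 2).
      { apply Rle_lt_trans with (2 * (2 ^ n) ^ 2 * (2 * Q2R e ^ 2)).
        - apply Rmult_le_compat_l; lra.
        - apply Rlt_le_trans with (2 * (2 ^ n) ^ 2 * (2 * / (8 * (2 ^ n) ^ 2))).
          + apply Rmult_lt_compat_l; lra.
          + right. field. apply pow_nonzero; lra. }
      lra.
  - intros x Hx. assert (Lx : l2 x) by (destruct Hx; auto).
    apply Hball; auto.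
    unfold norm2. apply sq_lt_norm; auto.
    pose proof (U_bound q s' e x Hx) as Hxb. fold s in Hxb.
    pose proof (sq_tri x (pad s) y Lx Lps Ly).
    assert (eta2 <= rho ^ 2 / 4) by apply Rmin_r.
    change (sq (sub_seq x y) < rho ^ 2). lra.
  - lia.
Qed.
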